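(* Let $(\mathcal{X},d)$ be a finite metric space $\mathcal{X}=\{x_0,\dots,x_n\}$ ($n\ge1$, pairwise distinct points), let $(\mathcal{Y},\|\cdot\|)$ be a non-trivial, strictly convex real Banach space, let $y\in\operatorname{Lip}^1_0$ and let $v\in\mathcal{Y}$ with $\|v\|=1$. Define $D=\{t=(t_0,\dots,t_n)\in\mathbb{R}^{n+1} : (y_0+t_0v,\dots,y_n+t_nv)\in\operatorname{Lip}^1_0\}$. Then $D$ is a nonempty, convex, compact subset of $\{0\}\times\mathbb{R}^n$, and for every extreme point $t\in\operatorname{ext}(D)$ the point $(y_0+t_0v,\dots,y_n+t_nv)$ is an extreme point of $\operatorname{Lip}^1_0$.
   Context: $\operatorname{Lip}^1_0$ denotes the set of all $y=(y_0,\dots,y_n)\in\mathcal{Y}^{n+1}$ with $y_0=0$ and $\|y_i-y_j\|\le d(x_i,x_j)$ for all $i,j\in\{0,1,\dots,n\}$. $\operatorname{ext}(C)$ denotes the set of extreme points of a convex set $C$. *)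

(* Defs.v *)
From mathcomp Require Import all_boot all_algebra all_classical all_reals all_analysis.
Import GRing.Theory Num.Theory numFieldTopology.Exports numFieldNormedType.Exports.
Local Open Scope classical_set_scope.
Local Open Scope ring_scope.

(* (d : 'I_n.+1 -> 'I_n.+1 -> R) is a metric on the index set {0,..,n};
   the points x_i are identified with their indices (pairwise distinct
   points = positive distance between distinct indices). *)
Definition is_metric {R : realType} {n : nat} (d : 'I_n.+1 -> 'I_n.+1 -> R) :=
  (forall i j, (d i j == 0) = (i == j)) /\
  (forall i j, 0 <= d i j) /\
  (forall i j, d i j = d j i) /\
  (forall i j k, d i k <= d i j + d j k).

Definition strictly_convex {R : realType} (Y : normedModType R) :=
  forall x y : Y, `|x| = 1 -> `|y| = 1 -> x != y -> `|2^-1 *: (x + y)| < 1.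

Definition Lip10 {R : realType} {Y : normedModType R} {n : nat}
  (d : 'I_n.+1 -> 'I_n.+1 -> R) : set {ffun 'I_n.+1 -> Y} :=
  [set y | y ord0 = 0 /\ forall i j, `|y i - y j| <= d i j].

Definition extreme_point {R : numDomainType} {V : lmodType R} (C : set V) (x : V) :=
  C x /\ forall a b (l : R), C a -> C b -> 0 < l < 1 ->
    x = l *: a + (1 - l) *: b -> a = b.

Definition shift_dir {R : realType} {Y : normedModType R} {n : nat}
  (y : {ffun 'I_n.+1 -> Y}) (v : Y) (t : 'rV[R]_n.+1) : {ffun 'I_n.+1 -> Y} :=
  [ffun i => y i + t ord0 i *: v].

Definition Dset {R : realType} {Y : normedModType R} {n : nat}
  (d : 'I_n.+1 -> 'I_n.+1 -> R) (y : {ffun 'I_n.+1 -> Y}) (v : Y)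
  : set 'rV[R]_n.+1 :=
  [set t | Lip10 d (shift_dir y v t)].

(* Main.v *)
Require Import Defs.
From mathcomp Require Import all_boot all_algebra all_classical all_reals all_analysis.
From mathcomp Require Import ring lra.
Import GRing.Theory Num.Theory numFieldTopology.Exports numFieldNormedType.Exports.
Import order.Order.TTheory.
Local Open Scope classical_set_scope.
Local Open Scope ring_scope.

Section helpers.
Variables (R : realType) (Y : normedModType R).

Lemma norm_eq_r (p q : Y) (r l : R) : 0 < l -> l < 1 -> `|p| <= r -> `|q| <= r ->
  `|l *: p + (1 - l) *: q| = r -> `|p| = r.
Proof.
move=> l0 l1 hp hq E.
have tri : `|l *: p + (1 - l) *: q| <= l * `|p| + (1 - l) * `|q|.
  apply: le_trans (ler_normD _ _) _.
  by rewrite !normrZ !ger0_norm // ?subr_ge0 ltW.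
apply/eqP; rewrite eq_le hp /=.
rewrite E in tri.
have h1 : (1 - l) * `|q| <= (1 - l) * r by rewrite ler_wpM2l // subr_ge0 ltW.
have : l * r <= l * `|p| by lra.
by rewrite ler_pM2l.
Qed.

Lemma sc_aux (sc : strictly_convex Y) (p q : Y) (r l : R) : 0 < r -> 0 < l -> l <= 2^-1 ->
  `|p| <= r -> `|q| <= r -> `|l *: p + (1 - l) *: q| = r -> p = q.
Proof.
move=> r0 l0 l2 hp hq E.
have l1 : l < 1 by apply: le_lt_trans l2 _; rewrite invf_lt1 // ltr1n.
have Ep := norm_eq_r _ _ _ _ l0 l1 hp hq E.
have E' : `|(1 - l) *: q + (1 - (1 - l)) *: p| = r.
  have -> : 1 - (1 - l) = l by ring.
  by rewrite addrC.
have Eq : `|q| = r.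
  apply: (norm_eq_r _ _ _ (1 - l) _ _ hq hp E'); lra.
case: (eqVneq p q) => // pq.
set m := 2^-1 *: (p + q).
have hm : `|m| < r.
  have rV : r^-1 != 0 by rewrite invr_eq0 gt_eqF.
  have : `|2^-1 *: (r^-1 *: p + r^-1 *: q)| < 1.
    apply: sc; first by rewrite normrZ ger0_norm ?invr_ge0 ?ltW // Ep mulVf ?gt_eqF.
      by rewrite normrZ ger0_norm ?invr_ge0 ?ltW // Eq mulVf ?gt_eqF.
    apply/negP => /eqP H; move/eqP: pq; apply.
    by rewrite -[p]scale1r -(mulfV (lt0r_neq0 r0)) -scalerA H scalerA mulfV ?gt_eqF // scale1r.
  rewrite -scalerDr scalerA mulrC -scalerA normrZ ger0_norm ?invr_ge0 ?ltW //.
  by rewrite -/m ltr_pdivrMl // mulr1.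
have e : l *: p + (1 - l) *: q = (2 * l) *: m + (1 - 2 * l) *: q.
  rewrite /m scalerA mulrAC mulfV ?pnatr_eq0 // mul1r scalerDr -addrA -scalerDl.
  congr (_ + _ *: _); ring.
clearbody m.
have h22 : 2 * 2^-1 = 1 :> R by rewrite mulfV.
have h2l : 0 <= 2 * l by lra.
have h12 : 0 <= 1 - 2 * l by lra.
have : `|l *: p + (1 - l) *: q| < r.
  rewrite e; apply: le_lt_trans (ler_normD _ _) _.
  rewrite !normrZ Eq !ger0_norm //.
  nra.
  exact: ltW.
by rewrite E ltxx.
Qed.

Lemma sc_gen (sc : strictly_convex Y) (p q : Y) (r l : R) : 0 < r -> 0 < l -> l < 1 ->
  `|p| <= r -> `|q| <= r -> `|l *: p + (1 - l) *: q| = r -> p = q.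
Proof.
move=> r0 l0 l1 hp hq E.
have [l2|l2] := leP l 2^-1; first exact: (sc_aux sc _ _ _ _ r0 l0 l2 hp hq E).
have h22 : 2 * 2^-1 = 1 :> R by rewrite mulfV.
apply/esym; apply: (sc_aux sc q p r (1 - l) r0) => //; first lra.
  lra.
have -> : 1 - (1 - l) = l by ring.
by rewrite addrC.
Qed.
Lemma comb_id (V : lmodType R) (u w : V) (l ai bi aj bj : R) :
  u + (l * ai + (1 - l) * bi - (l * aj + (1 - l) * bj)) *: w =
  l *: (u + (ai - aj) *: w) + (1 - l) *: (u + (bi - bj) *: w).
Proof.
rewrite !scalerDr addrACA -scalerDl !scalerA -scalerDl.
have -> : l + (1 - l) = 1 by rewrite addrC subrK.
by rewrite scale1r; congr (_ + _ *: _); ring.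
Qed.
End helpers.

Theorem mainTheorem4 (R : realType) (Y : completeNormedModType R) (n : nat)
  (d : 'I_n.+1 -> 'I_n.+1 -> R) (y : {ffun 'I_n.+1 -> Y}) (v : Y) :
  (0 < n)%N ->
  is_metric d ->
  (exists z : Y, z != 0) ->
  strictly_convex Y ->
  Lip10 d y ->
  `|v| = 1 ->
  let D := Dset d y v in
  [/\ D !=set0,
      @convex_set R 'rV[R]_n.+1 D,
      compact D,
      (forall t, D t -> t ord0 ord0 = 0) &
      (forall t, extreme_point D t -> extreme_point (@Lip10 R Y n d) (shift_dir y v t))].
Proof.
move=> _ [dii [d0 [dsym dtri]]] _ sc [y0 yL] v1 D.
have v0 : v != 0 by rewrite -normr_eq0 v1 oner_eq0.
have shE t i : shift_dir y v t i = y i + t ord0 i *: v by rewrite ffunE.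
have Dt0 t : D t -> t ord0 ord0 = 0.
  case=> + _; rewrite shE y0 add0r => /eqP; rewrite scaler_eq0 (negbTE v0) orbF.
  by move/eqP.
split => //.
- exists 0; split; first by rewrite shE mxE scale0r addr0.
  by move=> i j; rewrite !shE !mxE !scale0r !addr0.
- move=> a b l; rewrite !inE => Da Db.
  have -> : conv l a b = l%:num *: (a : 'rV[R]_n.+1) + (1 - l%:num) *: b :> 'rV[R]_n.+1 by [].
  have l0 : 0 <= l%:num := ge0 l.
  have l1 : l%:num <= 1 := le1 l.
  have a0 := Dt0 _ Da; have b0 := Dt0 _ Db.
  move: Da Db => [_ La] [_ Lb]; split.
    by rewrite shE !mxE a0 b0 !mulr0 addr0 scale0r addr0.
  move=> i j; rewrite !shE !mxE.
  have e1 (c c' : R) : y i + c *: v - (y j + c' *: v) = (y i - y j) + (c - c') *: v.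
    by rewrite scalerBl opprD addrACA.
  have := La i j; have := Lb i j; rewrite !shE !e1 => hb ha.
  rewrite comb_id.
  apply: le_trans (ler_normD _ _) _.
  rewrite !normrZ !ger0_norm //.
  have m0 : 0 <= 1 - l%:num by rewrite subr_ge0.
  have -> : d i j = l%:num * d i j + (1 - l%:num) * d i j by rewrite -mulrDl addrC subrK mul1r.
  by rewrite lerD // ler_wpM2l.
- apply: bounded_closed_compact.
    set K := \sum_i (d i ord0 + `|y i|).
    have K0 : 0 <= K by apply: sumr_ge0 => i _; rewrite addr_ge0.
    have bK t i : D t -> `|t ord0 i| <= K.
      move=> Dt; have t0 := Dt0 _ Dt; case: Dt => _ Lt.
      have := Lt i ord0; rewrite !shE y0 t0 scale0r !addr0 subr0 => h.
      apply: le_trans (_ : d i ord0 + `|y i| <= K).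
        rewrite -[`|t ord0 i|]mulr1 -v1 -normrZ.
        have -> : t ord0 i *: v = (y i + t ord0 i *: v) - y i by rewrite addrC addKr.
        by apply: le_trans (ler_normB _ _) _; rewrite lerD2r.
      rewrite /K (bigD1 i) //= lerDl; apply: sumr_ge0 => k _; exact: addr_ge0.
    exists K; split; first by rewrite ger0_real.
    move=> M KM t Dt /=.
    rewrite /Num.Def.normr /= mx_normrE.
    elim/big_ind: _ => //.
    + by apply: le_trans K0 (ltW KM).
    + by move=> x1 x2 h1 h2; rewrite ge_max h1 h2.
    + move=> [i j] _ /=; rewrite (ord1 i); apply: le_trans (bK _ _ Dt) (ltW KM).
  have hc i : continuous (fun t : 'rV[R]_n.+1 => shift_dir y v t i).
    move=> t; rewrite (_ : (fun t : 'rV[R]_n.+1 => shift_dir y v t i) = (fun t => y i + t ord0 i *: v)); last first.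
      by apply: funext => s; rewrite shE.
    exact: (cvgD (cvg_cst (y i)) (cvgZ (@coord_continuous R 1 n.+1 ord0 i t) (cvg_cst v))).
  pose g (p : option ('I_n.+1 * 'I_n.+1)) (t : 'rV[R]_n.+1) : R :=
    if p is Some (i, j) then `|shift_dir y v t i - shift_dir y v t j| - d i j
    else `|shift_dir y v t ord0|.
  have -> : D = \bigcap_(p in setT) (g p @^-1` [set x | x <= 0]).
    apply/seteqP; split.
      move=> t [h0 hL] p _ /=; case: p => [[i j]|] /=.
        by rewrite subr_le0.
      by rewrite h0 normr0.
    move=> t H; split.
      by have := H None I; rewrite /= normr_le0 => /eqP.
    by move=> i j; have := H (Some (i, j)) I; rewrite /= subr_le0.
  apply: closed_bigI => p _; apply: preimage_closed; last exact: closed_le.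
  move=> t _; case: p => [[i j]|] /=.
    exact: (cvgB (cvg_norm (cvgB (hc i t) (hc j t))) (cvg_cst (d i j))).
  exact: (cvg_norm (hc ord0 t)).
- move=> t [Dt ext].
  have t0 := Dt0 _ Dt.
  have zLip : Lip10 d (shift_dir y v t) := Dt.
  set z := shift_dir y v t in zLip *.
  have [z0 zL] := zLip.
  split; first exact: zLip.
  move=> a b l [a0 aL] [b0 bL] /andP[l0 l1] zE.
  have zi i : z i = l *: a i + (1 - l) *: b i by rewrite zE !ffunE.
  pose tight := [rel i j | `|z i - z j| == d i j].
  have tsym : symmetric tight by move=> i j /=; rewrite -normrN opprB dsym.
  have tE i j : tight i j -> a i - a j = z i - z j /\ b i - b j = z i - z j.
    move=> /eqP h.
    case: (eqVneq i j) => [->|ij]; first by rewrite !subrr.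
    have dpos : 0 < d i j by rewrite lt_neqAle eq_sym dii ij d0.
    have hz : z i - z j = l *: (a i - a j) + (1 - l) *: (b i - b j).
      by rewrite !zi !scalerBr opprD addrACA.
    have pq : a i - a j = b i - b j.
      apply: (@sc_gen R Y sc _ _ _ _ dpos l0 l1 (aL i j) (bL i j)).
      by rewrite -hz.
    have -> : z i - z j = a i - a j by rewrite hz -pq -scalerDl addrC subrK scale1r.
    by rewrite pq.
  have Peq (c : {ffun 'I_n.+1 -> Y}) : c ord0 = 0 ->
      (forall u w, tight u w -> c u - c w = z u - z w) ->
      forall i, connect tight ord0 i -> c i = z i.
    move=> c0 cE i ci.
    have cl : fingraph.closed tight [pred k | c k == z k].
      move=> u w /cE hc.
      have hc' : c u - z u = c w - z w.
        rewrite -(subrK (c w) (c u)) hc addrAC [z u - z w - z u]addrAC subrr add0r addrC.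
        done.
      by rewrite !inE -(subr_eq0 (c u)) -(subr_eq0 (c w)) hc'.
    have := closed_connect cl ci; rewrite !inE c0 z0 eqxx => h.
    by apply/eqP; rewrite -h.
  case: (boolP [forall i, connect tight ord0 i]) => [/forallP conn | ].
    apply/ffunP => i.
    rewrite (Peq a a0 (fun u w h => (tE u w h).1) i (conn i)).
    by rewrite (Peq b b0 (fun u w h => (tE u w h).2) i (conn i)).
  rewrite negb_forall => /existsP [i0 ni0].
  exfalso.
  pose chi : 'rV[R]_n.+1 := \row_k (if connect tight ord0 k then 0 else 1).
  pose slack i j := if tight i j then 1 else d i j - `|z i - z j|.
  have slack_pos i j : 0 < slack i j.
    rewrite /slack; case: ifP => // /negbT /= nt.
    by rewrite subr_gt0 lt_neqAle nt zL.
  pose eps := \big[Num.min/1]_(p : 'I_n.+1 * 'I_n.+1) slack p.1 p.2.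
  have eps0 : 0 < eps.
    rewrite /eps; elim/big_ind: _ => [|x1 x2 h1 h2|p _];
      [exact: ltr01|by rewrite lt_min h1 h2|exact: slack_pos].
  have epsle i j : eps <= slack i j.
    by rewrite /eps (bigD1 (i, j)) //= ge_min lexx.
  have Dc c : `|c| <= eps -> D (t + c *: chi).
    move=> hc.
    have eI k : shift_dir y v (t + c *: chi) k
        = z k + (c * (if connect tight ord0 k then 0 else 1)) *: v.
      by rewrite /z !shE !mxE scalerDl addrA.
    split.
      by rewrite eI connect0 mulr0 scale0r addr0.
    move=> i j; rewrite !eI.
    case Ci: (connect tight ord0 i); case Cj: (connect tight ord0 j);
      rewrite ?mulr0 ?mulr1 ?scale0r ?addr0.
    - exact: zL.
    - have nt : ~~ tight i j.
        by apply/negP => tij; move: Cj; rewrite (connect_trans Ci (connect1 tij)).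
      rewrite opprD addrA; apply: le_trans (ler_normB _ _) _.
      rewrite normrZ v1 mulr1.
      have := epsle i j; rewrite /slack (negbTE nt) => h.
      lra.
    - have nt : ~~ tight i j.
        apply/negP => tij; move: Ci.
        have tji : tight j i by move: tij => /=; rewrite -normrN opprB dsym.
        by rewrite (connect_trans Cj (connect1 tji)).
      rewrite addrAC; apply: le_trans (ler_normD _ _) _.
      rewrite normrZ v1 mulr1.
      have := epsle i j; rewrite /slack (negbTE nt) => h.
      lra.
    - by rewrite opprD addrACA subrr addr0; exact: zL.
  have D1 : D (t + eps *: chi) by apply: Dc; rewrite ger0_norm; [exact: lexx | exact: ltW].
  have D2 : D (t + (- eps) *: chi) by apply: Dc; rewrite normrN ger0_norm; [exact: lexx | exact: ltW].
  have h2 : 0 < (2^-1 : R) < 1 by rewrite invr_gt0 ltr0n invf_lt1 ?ltr0n ?ltr1n.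
  have et : t = 2^-1 *: (t + eps *: chi) + (1 - 2^-1) *: (t + (- eps) *: chi).
    apply/matrixP => u k; rewrite !mxE.
    by field.
  have := ext _ _ _ D1 D2 h2 et.
  move/matrixP/(_ ord0 i0); rewrite !mxE (negbTE ni0) !mulr1 => /addrI h'.
  have := addr_gt0 eps0 eps0.
  by rewrite {2}h' subrr ltxx.
Qed.
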